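(* Let $S$ be a Polish space and $(X_n),(Y_n)$ sequences of $S$-valued random variables with $X_n//_*Y_n\to1$. Then: (a) if $Y_n\xrightarrow{(d)}Y$, then $X_n\xrightarrow{(d)}Y$; (b) if $(g_n)$ is a sequence of continuous functions from $S$ into a Polish space $S'$, then $g_n(X_n)//_*g_n(Y_n)\to1$.
   Context: $\mathbb{P}_X$ denotes the law of $X$. Write $X_n//_*Y_n\to1$ if for every $\varepsilon>0$ there exist measurable sets $A_n^\varepsilon\subset S$ and measurable functions $f_n^\varepsilon:A_n^\varepsilon\to\mathbb{R}$ with $\mathbb{P}_{X_n}=f_n^\varepsilon\mathbb{P}_{Y_n}$ on $A_n^\varepsilon$ (i.e. $\mathbb{P}_{X_n}(B)=\int_Bf_n^\varepsilon d\mathbb{P}_{Y_n}$ for Borel $B\subset A_n^\varepsilon$), such that $\sup_{x\in A_n^\varepsilon}|f_n^\varepsilon(x)-1|\to0$ as $n\to\infty$ and $\mathbb{P}_{Y_n}(A_n^\varepsilon)\ge1-\varepsilon$ for $n$ large enough. *)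

(* Defs.v *)
From HB Require Import structures.
From mathcomp Require Import all_boot all_order all_algebra.
From mathcomp Require Import all_classical all_reals all_analysis.
Set Implicit Arguments. Unset Strict Implicit. Unset Printing Implicit Defensive.
Import Order.TTheory GRing.Theory Num.Theory.
Import numFieldNormedType.Exports.
Local Open Scope classical_set_scope.
Local Open Scope ring_scope.

Definition borel (T : ptopologicalType) : measurableType _ :=
  g_sigma_algebraType (@open T).

Definition separable_space (T : topologicalType) : Prop :=
  exists D : set T, countable D /\ closure D = setT.

Definition completely_metrizable (R : realType) (T : topologicalType) : Prop :=
  exists dist : T -> T -> R,
    [/\ (forall x y, 0 <= dist x y) /\
        (forall x y, dist x y = 0 <-> x = y),
        (forall x y, dist x y = dist y x),
        (forall x y z, dist x z <= dist x y + dist y z),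
        (forall A : set T, open A <->
           (forall x, A x -> exists2 e : R, 0 < e & [set y | dist x y < e] `<=` A))
      &
        (forall u : nat -> T,
           (forall e : R, 0 < e -> exists N, forall m n, (N <= m)%N -> (N <= n)%N ->
              dist (u m) (u n) < e) ->
           exists l : T, forall e : R, 0 < e -> exists N, forall n, (N <= n)%N ->
              dist (u n) l < e)].

Definition polish (R : realType) (T : topologicalType) : Prop :=
  separable_space T /\ completely_metrizable R T.

Definition law d (Omega : measurableType d) dS (S : measurableType dS)
  (R : realType) (P : probability Omega R) (X : Omega -> S) : set S -> \bar R :=
  pushforward P X.

(* X_n //_* Y_n -> 1, stated for the laws mu n = P_{X_n}, nu n = P_{Y_n}. *)
Definition dens_close_to_one dS (S : measurableType dS) (R : realType)
  (mu nu : nat -> set S -> \bar R) : Prop :=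
  forall eps : R, 0 < eps ->
    exists (A : nat -> set S) (f : nat -> S -> R),
      [/\ (forall n, measurable (A n)),
          (forall n, measurable_fun (A n) (f n)),
          (forall n (B : set S), measurable B -> B `<=` A n ->
              mu n B = (\int[nu n]_(x in B) (f n x)%:E)%E),
          (forall delta : R, 0 < delta ->
              \forall n \near \oo, forall x, A n x -> `|f n x - 1| <= delta)
        & (\forall n \near \oo, ((1 - eps)%:E <= nu n (A n))%E)].

Definition cvg_distr (R : realType) (S : ptopologicalType)
  d1 (Om1 : measurableType d1) (P1 : probability Om1 R) (Z : nat -> Om1 -> borel S)
  d2 (Om2 : measurableType d2) (P2 : probability Om2 R) (Z0 : Om2 -> borel S) : Prop :=
  forall h : S -> R, continuous h -> (exists M : R, forall x, `|h x| <= M) ->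
    (fun n => (\int[P1]_w (h (Z n w))%:E)%E) @ \oo --> (\int[P2]_w (h (Z0 w))%:E)%E.

(* Main.v *)
Require Import Defs.
From HB Require Import structures.
From mathcomp Require Import all_boot all_order all_algebra.
From mathcomp Require Import all_classical all_reals all_analysis.
From mathcomp Require Import measurable_realfun.
From mathcomp Require Import ring lra.
Import Order.TTheory GRing.Theory Num.Theory.
Import numFieldNormedType.Exports.
Set Implicit Arguments. Unset Strict Implicit.
Local Open Scope classical_set_scope.
Local Open Scope ring_scope.


Lemma measurable_inv (R : realType) : measurable_fun setT (@GRing.inv R).
Proof.
rewrite -(setUv [set (0:R)]); apply/measurable_funU => //.
  exact: measurableC.
split.
  move=> _ Y mY; have [Y0|Y0] := pselect (Y (0:R)^-1).
    by rewrite (_ : _ `&` _ = [set 0]) //; apply/seteqP; split => [x [-> _]|x ->] //.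
  by rewrite (_ : _ `&` _ = set0) //; apply/seteqP; split => [x [-> /= ?]|x] //.
apply: open_continuous_measurable_fun.
  exact/closed_openC/accessible_closed_set1/hausdorff_accessible/Rhausdorff.
move=> x; rewrite inE => /eqP x0; exact: inv_continuous.
Qed.

Lemma mset_lt d (T : measurableType d) (R : realType) (f g : T -> R) :
  measurable_fun setT f -> measurable_fun setT g -> measurable [set x | f x < g x].
Proof.
move=> mf mg; have := measurable_fun_ltr mf mg measurableT (Y:=[set true]) I.
by rewrite setTI.
Qed.

Lemma mset_le d (T : measurableType d) (R : realType) (f g : T -> R) :
  measurable_fun setT f -> measurable_fun setT g -> measurable [set x | f x <= g x].
Proof.
move=> mf mg; have := measurable_fun_ler mf mg measurableT (Y:=[set true]) I.
by rewrite setTI.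
Qed.

Section helpers.
Context d (T : measurableType d) (R : realType).
Variable m : {measure set T -> \bar R}.

Lemma intZ E (K : R) (g : T -> R) : measurable E -> measurable_fun E g ->
  0 <= K -> (forall x, E x -> 0 <= g x) ->
  (\int[m]_(x in E) (K * g x)%:E = K%:E * \int[m]_(x in E) (g x)%:E)%E.
Proof.
move=> mE mg K0 g0; under eq_integral do rewrite EFinM.
apply: ge0_integralZl => //; try exact/measurable_EFinP.
all: try by move=> x Ex; rewrite lee_fin g0.
Qed.

Lemma intD E (f g : T -> R) : measurable E -> measurable_fun E f -> measurable_fun E g ->
  (forall x, E x -> 0 <= f x) -> (forall x, E x -> 0 <= g x) ->
  (\int[m]_(x in E) (f x + g x)%:E = \int[m]_(x in E) (f x)%:E + \int[m]_(x in E) (g x)%:E)%E.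
Proof.
move=> mE mf mg f0 g0; under eq_integral do rewrite EFinD.
apply: ge0_integralD => //; try exact/measurable_EFinP.
all: try by move=> x Ex; rewrite lee_fin ?f0 ?g0.
Qed.

Lemma intle E (f g : T -> R) : measurable E -> measurable_fun E f -> measurable_fun E g ->
  (forall x, E x -> 0 <= f x) -> (forall x, E x -> f x <= g x) ->
  (\int[m]_(x in E) (f x)%:E <= \int[m]_(x in E) (g x)%:E)%E.
Proof.
move=> mE mf mg f0 fg; apply: ge0_le_integral => //; try exact/measurable_EFinP.
all: try by move=> x Ex; rewrite lee_fin ?f0 ?fg.
Qed.

End helpers.

Section RN.
Context d (T : measurableType d) (R : realType).
Variables mu nu : probability T R.

Definition lam := measure_add mu nu.
HB.instance Definition _ := Measure.copy lam (measure_add mu nu).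
Lemma lam_fin : fin_num_fun lam.
Proof.
move=> A mA; rewrite /lam measure_addE fin_numD.
by rewrite !fin_num_measure.
Qed.
HB.instance Definition _ := @Measure_isFinite.Build _ T R lam lam_fin.

Lemma mu_lam : mu `<< lam.
Proof.
move=> N lN A mA AN; have := lN A mA AN; rewrite /lam measure_addE.
move=> /eqP; rewrite padde_eq0 ?measure_ge0// => /andP[/eqP -> _] //.
Qed.

Lemma nu_lam : nu `<< lam.
Proof.
move=> N lN A mA AN; have := lN A mA AN; rewrite /lam measure_addE.
move=> /eqP; rewrite padde_eq0 ?measure_ge0// => /andP[_ /eqP ->] //.
Qed.

Definition pd := fun x => fine (Radon_Nikodym_SigmaFinite.f mu lam x).
Definition qd := fun x => fine (Radon_Nikodym_SigmaFinite.f nu lam x).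

Lemma pdE x : (pd x)%:E = Radon_Nikodym_SigmaFinite.f mu lam x.
Proof. by rewrite fineK // Radon_Nikodym_SigmaFinite.f_fin_num //; exact: mu_lam. Qed.
Lemma qdE x : (qd x)%:E = Radon_Nikodym_SigmaFinite.f nu lam x.
Proof. by rewrite fineK // Radon_Nikodym_SigmaFinite.f_fin_num //; exact: nu_lam. Qed.

Lemma pd_ge0 x : 0 <= pd x.
Proof. by rewrite -lee_fin pdE Radon_Nikodym_SigmaFinite.f_ge0 //; exact: mu_lam. Qed.
Lemma qd_ge0 x : 0 <= qd x.
Proof. by rewrite -lee_fin qdE Radon_Nikodym_SigmaFinite.f_ge0 //; exact: nu_lam. Qed.

Lemma measurable_pd : measurable_fun setT pd.
Proof.
apply/measurable_EFinP; rewrite (_ : EFin \o pd = Radon_Nikodym_SigmaFinite.f mu lam).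
  exact: measurable_int _ (Radon_Nikodym_SigmaFinite.f_integrable mu_lam).
by apply/funext => x; rewrite /= pdE.
Qed.
Lemma measurable_qd : measurable_fun setT qd.
Proof.
apply/measurable_EFinP; rewrite (_ : EFin \o qd = Radon_Nikodym_SigmaFinite.f nu lam).
  exact: measurable_int _ (Radon_Nikodym_SigmaFinite.f_integrable nu_lam).
by apply/funext => x; rewrite /= qdE.
Qed.

Lemma muE B : measurable B -> mu B = (\int[lam]_(x in B) (pd x)%:E)%E.
Proof.
move=> mB; rewrite (Radon_Nikodym_SigmaFinite.f_integral mu_lam) //.
by apply: eq_integral => x _; rewrite pdE.
Qed.
Lemma nuE B : measurable B -> nu B = (\int[lam]_(x in B) (qd x)%:E)%E.
Proof.
move=> mB; rewrite (Radon_Nikodym_SigmaFinite.f_integral nu_lam) //.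
by apply: eq_integral => x _; rewrite qdE.
Qed.

Lemma chg_mu (k : T -> R) E : measurable E -> measurable_fun E k ->
  (forall x, 0 <= k x) ->
  (\int[mu]_(x in E) (k x)%:E = \int[lam]_(x in E) (k x * pd x)%:E)%E.
Proof.
move=> mE mk k0.
rewrite -(@Radon_Nikodym_SigmaFinite.change_of_variables _ _ _ _ _ mu_lam (fun x => (k x)%:E) E _ mE).
- by apply: eq_integral => x _; rewrite -pdE.
- by move=> x; rewrite lee_fin.
- exact/measurable_EFinP.
Qed.
Lemma chg_nu (k : T -> R) E : measurable E -> measurable_fun E k ->
  (forall x, 0 <= k x) ->
  (\int[nu]_(x in E) (k x)%:E = \int[lam]_(x in E) (k x * qd x)%:E)%E.
Proof.
move=> mE mk k0.
rewrite -(@Radon_Nikodym_SigmaFinite.change_of_variables _ _ _ _ _ nu_lam (fun x => (k x)%:E) E _ mE).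
- by apply: eq_integral => x _; rewrite -qdE.
- by move=> x; rewrite lee_fin.
- exact/measurable_EFinP.
Qed.


Lemma measB : measurable [set x | qd x < pd x].
Proof.
have := measurable_fun_ltr measurable_qd measurable_pd measurableT (Y:=[set true]) I.
by rewrite setTI.
Qed.

Lemma int_le (e K : R) (k : T -> R) : 0 <= K -> measurable_fun setT k ->
  (forall x, 0 <= k x <= K) ->
  (forall B, measurable B -> (mu B <= nu B + e%:E)%E) ->
  (\int[mu]_x (k x)%:E <= \int[nu]_x (k x)%:E + (K * e)%:E)%E.
Proof.
move=> K0 mk kK TV.
have k0 x : 0 <= k x by case/andP: (kK x).
set B := [set x | qd x < pd x].
have mB : measurable B := measB.
have mBc : measurable (~` B) := measurableC mB.
have mkp : measurable_fun setT (fun x => k x * pd x).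
  exact: measurable_funM mk measurable_pd.
have mkq : measurable_fun setT (fun x => k x * qd x).
  exact: measurable_funM mk measurable_qd.
have mKp : measurable_fun setT (fun x => K * pd x).
  by apply: measurable_funM => //; exact: measurable_pd.
have mKq : measurable_fun setT (fun x => K * qd x).
  by apply: measurable_funM => //; exact: measurable_qd.
have kp0 x : 0 <= k x * pd x by rewrite mulr_ge0 ?pd_ge0.
have kq0 x : 0 <= k x * qd x by rewrite mulr_ge0 ?qd_ge0.
have Kp0 x : 0 <= K * pd x by rewrite mulr_ge0 ?pd_ge0.
have Kq0 x : 0 <= K * qd x by rewrite mulr_ge0 ?qd_ge0.
have dB : [disjoint B & ~` B] by apply/disj_setPLR; rewrite setCK.
rewrite (@chg_mu k setT measurableT mk) // (@chg_nu k setT measurableT mk) //.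
rewrite -(setUv B) !ge0_integral_setU //; first last.
- by move=> x _; rewrite lee_fin.
- by rewrite setUv; apply/measurable_EFinP.
- by move=> x _; rewrite lee_fin.
- by rewrite setUv; apply/measurable_EFinP.
have hc : (\int[lam]_(x in ~` B) (k x * pd x)%:E <= \int[lam]_(x in ~` B) (k x * qd x)%:E)%E.
  apply: intle => //; try exact: measurable_funTS.
  move=> x /= /negP; rewrite -leNgt => h; rewrite ler_wpM2l //.
have hb : (\int[lam]_(x in B) (k x * pd x)%:E + (K%:E * nu B) <=
          \int[lam]_(x in B) (k x * qd x)%:E + (K%:E * mu B))%E.
  rewrite nuE // muE // -!intZ //; try exact: measurable_funTS measurable_pd;
    try exact: measurable_funTS measurable_qd; try by move=> x _; rewrite ?pd_ge0 ?qd_ge0.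
  rewrite -!intD //; try exact: measurable_funTS.
  apply: intle => //; try (apply: measurable_funD; exact: measurable_funTS).
    by move=> x _; rewrite addr_ge0.
  move=> x Bx; have := kK x; case/andP => _ kxK.
  have h : 0 <= (K - k x) * (pd x - qd x).
    by rewrite mulr_ge0 // subr_ge0 // ltW.
  nra.
have nuBf : (K%:E * nu B)%E \is a fin_num by rewrite fin_numM // fin_num_measure.
have hb2 : (\int[lam]_(x in B) (k x * pd x)%:E <= \int[lam]_(x in B) (k x * qd x)%:E + (K * e)%:E)%E.
  rewrite -(leeD2rE _ _ nuBf); apply: (le_trans hb).
  set I1 := (\int[lam]_(x in B) (k x * qd x)%:E)%E.
  clearbody I1.
  rewrite -addeA; apply: leeD => //.
  rewrite EFinM -muleDr //; apply: lee_wpmul2l; first by rewrite lee_fin.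
  by rewrite addeC; apply: TV.
rewrite addeAC; apply: leeD => //.
Qed.

Definition Fd x := pd x / qd x.
Lemma Fd_ge0 x : 0 <= Fd x.
Proof. by rewrite /Fd divr_ge0 ?pd_ge0 ?qd_ge0. Qed.
Lemma measurable_Fd : measurable_fun setT Fd.
Proof.
apply: measurable_funM; first exact: measurable_pd.
exact: (measurableT_comp (@measurable_inv R) measurable_qd).
Qed.

Definition Ad (dl : R) := [set x | 0 < qd x] `&` [set x | (1 - dl) * qd x <= pd x]
  `&` [set x | pd x <= (1 + dl) * qd x].

Lemma Ad_meas dl : measurable (Ad dl).
Proof.
apply: measurableI; [apply: measurableI|].
- by apply: mset_lt => //; exact: measurable_qd.
- apply: mset_le; last exact: measurable_pd.
  by apply: measurable_funM => //; exact: measurable_qd.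
- apply: mset_le; first exact: measurable_pd.
  by apply: measurable_funM => //; exact: measurable_qd.
Qed.

Lemma Ad_dens dl B : measurable B -> B `<=` Ad dl ->
  mu B = (\int[nu]_(x in B) (Fd x)%:E)%E.
Proof.
move=> mB sB; rewrite (@chg_nu Fd B mB) //; last 2 first.
- exact: measurable_funTS measurable_Fd.
- exact: Fd_ge0.
rewrite muE //; apply: eq_integral => x /[!inE] Bx.
have [[q0 _] _] := sB x Bx.
by rewrite /Fd divfK // gt_eqF.
Qed.

Lemma Ad_close dl x : Ad dl x -> `|Fd x - 1| <= dl.
Proof.
move=> [[q0 h1] h2]; rewrite /Fd; move: q0 => /= q0.
have -> : pd x / qd x - 1 = (pd x - qd x) / qd x.
  by rewrite mulrBl divff // gt_eqF.
rewrite normrM normfV (gtr0_norm q0) ler_pdivrMr // ler_norml.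
move: h1 h2 => /= h1 h2; apply/andP; split; lra.
Qed.

Lemma Ad_big dl e : 0 < dl < 1 ->
  (forall B, measurable B -> (mu B <= nu B + e%:E)%E) ->
  (forall B, measurable B -> (nu B <= mu B + e%:E)%E) ->
  (nu (~` Ad dl) <= (2 * (e / dl))%:E)%E.
Proof.
move=> /andP[d0 d1] TV1 TV2.
set C0 := [set x | qd x <= 0].
set C1 := [set x | pd x < (1 - dl) * qd x].
set C2 := [set x | (1 + dl) * qd x < pd x].
have mqd := measurable_qd; have mpd := measurable_pd.
have mC0 : measurable C0 by apply: mset_le.
have mC1 : measurable C1 by apply: mset_lt => //; exact: measurable_funM.
have mC2 : measurable C2 by apply: mset_lt => //; exact: measurable_funM.
have sub : ~` Ad dl `<=` C0 `|` C1 `|` C2.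
  move=> x nA; rewrite /C0 /C1 /C2 /=.
  have [q0|q0] := leP (qd x) 0; first by left; left.
  have [h1|h1] := ltP (pd x) ((1 - dl) * qd x); first by left; right.
  have [h2|h2] := ltP ((1 + dl) * qd x) (pd x); first by right.
  by exfalso; apply: nA; split; [split|].
have nC0 : nu C0 = 0%E.
  rewrite nuE // (eq_integral (fun _ => 0%E)) ?integral0 // => x /[!inE] /= h.
  by rewrite (@le_anti _ _ (qd x) 0) // h qd_ge0.
have hC1 : (mu C1 <= ((1 - dl) * fine (nu C1))%:E)%E.
  rewrite muE // EFinM fineK ?fin_num_measure // nuE //.
  rewrite -intZ //; first last.
  - by move=> x _; exact: qd_ge0.
  - by rewrite subr_ge0 ltW.
  - exact: measurable_funTS.
  apply: intle => //; first exact: measurable_funTS.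
  - by apply: measurable_funTS; exact: measurable_funM.
  - by move=> x _; exact: pd_ge0.
  - by move=> x /= /ltW.
have hC2 : (((1 + dl) * fine (nu C2))%:E <= mu C2)%E.
  rewrite muE // EFinM fineK ?fin_num_measure // nuE //.
  rewrite -intZ //; first last.
  - by move=> x _; exact: qd_ge0.
  - lra.
  - exact: measurable_funTS.
  apply: intle => //; first by apply: measurable_funTS; exact: measurable_funM.
  - exact: measurable_funTS.
  - by move=> x _; apply: mulr_ge0; [lra|exact: qd_ge0].
  - by move=> x /= /ltW.
have a1 := TV2 _ mC1; have a2 := TV1 _ mC2.
rewrite -[nu C1]fineK ?fin_num_measure // -[mu C1]fineK ?fin_num_measure // in a1 hC1.
rewrite -[nu C2]fineK ?fin_num_measure // -[mu C2]fineK ?fin_num_measure // in a2 hC2.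
rewrite !lee_fin in a1 hC1 a2 hC2.
have c1 : fine (nu C1) <= e / dl.
  by rewrite ler_pdivlMr //; lra.
have c2 : fine (nu C2) <= e / dl.
  by rewrite ler_pdivlMr //; lra.
have H : (nu (~` Ad dl) <= nu C0 + nu C1 + nu C2)%E.
  apply: (le_trans (le_measure _ _ _ sub)); rewrite ?inE //.
  - exact: measurableC (Ad_meas dl).
  - by apply: measurableU => //; exact: measurableU.
  apply: (le_trans (measureU2 _ _ _)) => //; first exact: measurableU.
  by apply: leeD => //; exact: measureU2.
apply: (le_trans H).
rewrite nC0 add0e -[nu C1]fineK ?fin_num_measure // -[nu C2]fineK ?fin_num_measure //.
rewrite -EFinD lee_fin.
lra.
Qed.

End RN.

Section Seq.
Context d (T : measurableType d) (R : realType).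
Definition TVd (mu nu : nat -> set T -> \bar R) := forall e : R, 0 < e ->
  \forall n \near \oo, forall B, measurable B -> (mu n B <= nu n B + e%:E)%E.

Lemma dens_TV (mu nu : nat -> probability T R) :
  dens_close_to_one (fun n => (mu n : set T -> \bar R)) (fun n => (nu n : set T -> \bar R)) ->
  TVd (fun n => mu n) (fun n => nu n).
Proof.
move=> H e e0.
have eps0 : 0 < e / 3 by rewrite divr_gt0.
have [A [f [mA mf dens close big]]] := H _ eps0.
set dl := Order.min (e / 3) (2^-1 : R).
have dl0 : 0 < dl by rewrite lt_min eps0 invr_gt0 ltr0n.
have dle : dl <= e / 3 by rewrite ge_min lexx.
have dl1 : dl <= 2^-1 by rewrite ge_min lexx orbT.
near=> n.
have cl : forall x, A n x -> `|f n x - 1| <= dl by near: n; exact: close.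
have bg : ((1 - e / 3)%:E <= nu n (A n))%E by near: n; exact: big.
move=> B mB.
have mBA : measurable (B `&` A n) := measurableI _ _ mB (mA n).
have fge x : A n x -> 1 - dl <= f n x.
  by move=> /cl; rewrite ler_norml => /andP[h _]; lra.
have fle x : A n x -> f n x <= 1 + dl.
  by move=> /cl; rewrite ler_norml => /andP[_ h]; lra.
have h1 : (mu n (B `&` A n) <= ((1 + dl) * fine (nu n (B `&` A n)))%:E)%E.
  rewrite (dens n (B `&` A n) mBA (@subIsetr _ _ _)).
  rewrite EFinM fineK ?fin_num_measure // -integral_cst //.
  apply: (@intle _ _ _ _ _ (f n) (fun=> 1 + dl)) => //.
  - exact: measurable_funS (mA n) (@subIsetr _ _ _) (mf n).
  - by move=> x [_ Ax]; apply: le_trans (fge x Ax); lra.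
  - by move=> x [_ Ax]; exact: fle.
have h2 : (((1 - dl) * fine (nu n (A n)))%:E <= mu n (A n))%E.
  rewrite dens //.
  rewrite EFinM fineK ?fin_num_measure // -integral_cst //.
  apply: (@intle _ _ _ _ _ (fun=> 1 - dl) (f n)) => //.
  all: try exact: mf.
  all: try by move=> x _; lra.
  all: try by move=> x Ax; exact: fge.
have hC := probability_setC (mu n) (mA n).
have hU : (mu n B <= mu n (B `&` A n) + mu n (~` A n))%E.
  apply: (le_trans _ (measureU2 _ mBA (measurableC (mA n)))).
  apply: le_measure; rewrite ?inE //.
  - by apply: measurableU => //; exact: measurableC.
  - by move=> x Bx; have [Ax|nAx] := pselect (A n x); [left|right].
have a1 : (nu n (B `&` A n) <= nu n B)%E by apply: le_measure; rewrite ?inE //; exact: subIsetl.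
have b1 := probability_le1 (nu n) mB.
have c1 := probability_le1 (nu n) (mA n).
rewrite hC in hU.
rewrite -[mu n B]fineK ?fin_num_measure // -[nu n B]fineK ?fin_num_measure //.
rewrite -[mu n (B `&` A n)]fineK ?fin_num_measure // in h1 hU.
rewrite -[mu n (A n)]fineK ?fin_num_measure // in h2 hU.
rewrite -[mu n B]fineK ?fin_num_measure // in hU.
rewrite -[nu n (B `&` A n)]fineK ?fin_num_measure // in a1.
rewrite -[nu n B]fineK ?fin_num_measure // in a1 b1.
rewrite -[nu n (A n)]fineK ?fin_num_measure // in c1 bg.
rewrite -!EFinD -?EFinB !lee_fin in h1 h2 hU a1 b1 c1 bg *.
set a := fine (nu n (B `&` A n)) in h1 a1 *.
set c := fine (nu n (A n)) in h2 c1 bg *.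
have a0' : 0 <= a by apply: fine_ge0; exact: measure_ge0.
have al1 : a <= 1 by lra.
have ha : dl * a <= dl by nra.
have hc : dl * c <= dl by nra.
have hc0 : 0 <= dl * (e / 3) by apply: mulr_ge0; lra.
nra.
Unshelve. all: by end_near.
Qed.
Lemma TV_sym (mu nu : nat -> probability T R) :
  TVd (fun n => mu n) (fun n => nu n) -> TVd (fun n => nu n) (fun n => mu n).
Proof.
move=> H e e0; have := H e e0; apply: filterS => n hn B mB.
have := hn _ (measurableC mB).
rewrite !probability_setC //.
rewrite -[mu n B]fineK ?fin_num_measure // -[nu n B]fineK ?fin_num_measure //.
rewrite -!EFinB -EFinD !lee_fin; lra.
Qed.

Lemma bigmax_attain n (P : pred 'I_n.+1) (F : 'I_n.+1 -> nat) :
  (0 < \max_(i | P i) F i)%N -> exists2 i, P i & \max_(i | P i) F i = F i.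
Proof.
case: (pickP P) => [i0 Pi0|P0] h.
  exists [arg max_(i > i0 | P i) F i]; first by case: arg_maxnP.
  exact: bigmax_eq_arg.
by move: h; rewrite big_pred0.
Qed.

Definition dk (k : nat) : R := (k.+2%:R)^-1.
Lemma dk01 k : 0 < dk k < 1.
Proof.
rewrite /dk invr_gt0 ltr0n /= invf_lt1 ?ltr0n //.
by rewrite ltr1n.
Qed.
Lemma dk_le j k : (k <= j)%N -> dk j <= dk k.
Proof.
move=> kj; rewrite /dk lef_pV2 ?posrE ?ltr0n // ler_nat ltnS.
by apply: leq_trans kj _.
Qed.

Lemma TV_dens (mu nu : nat -> probability T R) :
  TVd (fun n => mu n) (fun n => nu n) ->
  dens_close_to_one (fun n => (mu n : set T -> \bar R)) (fun n => (nu n : set T -> \bar R)).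
Proof.
move=> H1; have H2 := @TV_sym mu nu H1.
move=> eps eps0.
have hN : forall k, exists N, forall n, (N <= n)%N ->
    (forall B, measurable B -> (mu n B <= nu n B + (eps * dk k / 2)%:E)%E) /\
    (forall B, measurable B -> (nu n B <= mu n B + (eps * dk k / 2)%:E)%E).
  move=> k; have e0 : 0 < eps * dk k / 2.
    by rewrite divr_gt0 // mulr_gt0 //; case/andP: (dk01 k).
  have [N1 _ h1] := H1 _ e0; have [N2 _ h2] := H2 _ e0.
  exists (maxn N1 N2) => n; rewrite geq_max => /andP[n1 n2].
  by split; [exact: h1|exact: h2].
have /choice [N HN] := hN.
pose kn n := \max_(k < n.+1 | (N k <= n)%N) k.+1.
exists (fun n => if kn n == 0%N then set0 else Ad (mu n) (nu n) (dk (kn n).-1)).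
exists (fun n => Fd (mu n) (nu n)).
split.
- by move=> n; case: ifP => _ //; exact: Ad_meas.
- by move=> n; apply: measurable_funTS; exact: measurable_Fd.
- move=> n B mB; case: ifP => _.
    by rewrite subset0 => ->; rewrite measure0 integral_set0.
  exact: Ad_dens.
- move=> delta d0.
  have [K _ hK] := nbhs_infty_gtr (delta^-1).
  have hK' := hK K (leqnn K).
  have dK : dk K <= delta.
    rewrite /dk -[delta]invrK lef_pV2 ?posrE ?invr_gt0 ?ltr0n //.
    apply: (le_trans (ltW hK')); rewrite ler_nat; exact: leq_trans (leqnSn K) (leqnSn _).
  near=> n => x; case: ifPn => [_ //|kn0].
  move=> /Ad_close h; apply: (le_trans h); apply: (le_trans _ dK); apply: dk_le.
  have : (K.+1 <= kn n)%N.
    have Kn : (K < n.+1)%N by rewrite ltnS; near: n; exact: nbhs_infty_ge.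
    apply: (@leq_bigmax_cond _ (fun k : 'I_n.+1 => (N k <= n)%N) (fun k => k.+1) (Ordinal Kn)) => /=.
    by near: n; exact: nbhs_infty_ge.
  by case: (kn n).
- near=> n.
  have kpos : (0 < kn n)%N.
    have Kn : (0 < n.+1)%N by [].
    apply: (@leq_bigmax_cond _ (fun k : 'I_n.+1 => (N k <= n)%N) (fun k => k.+1) (Ordinal Kn)) => /=.
    by near: n; exact: nbhs_infty_ge.
  have [j Nj kj] := bigmax_attain kpos.
  rewrite /= -/(kn n) in kj.
  rewrite kj /=.
  have [T1 T2] := HN j n Nj.
  have := Ad_big (dk01 j) T1 T2.
  have hjE : 2 * (eps * dk j / 2 / dk j) = eps.
    by have := dk01 j; case/andP => h0 _; field; rewrite gt_eqF.
  rewrite hjE probability_setC; last exact: Ad_meas.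
  set v := nu n (Ad (mu n) (nu n) (dk j)).
  rewrite -[v]fineK ?fin_num_measure //; last exact: Ad_meas.
  by rewrite -EFinB !lee_fin; lra.
Unshelve. all: by end_near.
Qed.

End Seq.

Section Final.
Context (R : realType).

Definition mkP d (Om : measurableType d) dS (S : measurableType dS)
  (P : probability Om R) (f : Om -> S) (mf : measurable_fun setT f) : probability S R :=
  distribution P (mfun_Sub (mem_set mf : f \in mfun)).

Lemma mkPE d (Om : measurableType d) dS (S : measurableType dS)
  (P : probability Om R) (f : Om -> S) (mf : measurable_fun setT f) :
  (mkP P mf : set S -> \bar R) = law P f.
Proof. by []. Qed.

Lemma int_cstP d (Om : measurableType d) (P : probability Om R) (r : R) :
  (\int[P]_w r%:E = r%:E)%E.
Proof.
transitivity (r%:E * P setT)%E; first exact: (integral_cst P measurableT r%:E).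
by rewrite probability_setT mule1.
Qed.

Lemma int_bnd d (Om : measurableType d) (P : probability Om R) (f : Om -> R) (K : R) :
  measurable_fun setT f -> (forall w, 0 <= f w <= K) ->
  (\int[P]_w (f w)%:E)%E \is a fin_num /\ (\int[P]_w (f w)%:E <= K%:E)%E.
Proof.
move=> mf fK.
have f0 w : 0 <= f w by case/andP: (fK w).
have hle : (\int[P]_w (f w)%:E <= K%:E)%E.
  have := @intle _ _ _ P setT f (fun=> K) measurableT mf (measurable_cst _)
    (fun w _ => f0 w) (fun w _ => (andP (fK w)).2).
  by rewrite int_cstP.
split => //; rewrite ge0_fin_numE; last by apply: integral_ge0 => w _; rewrite lee_fin.
by apply: le_lt_trans hle _; exact: ltry.
Qed.

Lemma int_shift d (Om : measurableType d) (P : probability Om R) (f : Om -> R) (M : R) :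
  measurable_fun setT f -> (forall w, `|f w| <= M) ->
  (\int[P]_w (f w)%:E = \int[P]_w (f w + M)%:E - M%:E)%E.
Proof.
move=> mf fM.
under [X in (_ = X - _)%E]eq_integral do rewrite EFinD.
have M0 : 0 <= M by apply: le_trans (fM point).
rewrite integralD //.
- by rewrite int_cstP addeK.
- apply/integrableP; split; first exact/measurable_EFinP.
  have [+ hb] := @int_bnd _ _ P (fun w => `|f w|) M (measurableT_comp (@normr_measurable _ _) mf)
    (fun w => introT andP (conj (normr_ge0 _) (fM w))).
  move=> _; apply: le_lt_trans hb _; exact: ltry.
- apply/integrableP; split => //.
  by rewrite (eq_integral (fun=> M%:E)) ?int_cstP ?ltry // => x _; rewrite gee0_abs // lee_fin.
Qed.

Lemma cont_meas_borel (S S' : ptopologicalType) (g : S -> S') : continuous g ->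
  measurable_fun setT (g : borel S -> borel S').
Proof.
move=> cg; apply: (@measurability _ _ (borel S) (borel S') setT g (@open S')) => //.
move=> _ [A oA <-]; rewrite setTI; apply: sub_sigma_algebra.
exact: open_comp.
Qed.

Lemma cont_meas_R (S : ptopologicalType) (g : S -> R) : continuous g ->
  measurable_fun setT (g : borel S -> R).
Proof.
move=> cg; apply: (@measurability _ _ (borel S) _ setT g (@RGenOpens.G R)).
  exact: RGenOpens.measurableE.
move=> _ [_ [a [b ->]] <-]; rewrite setTI; apply: sub_sigma_algebra.
apply: open_comp => //; exact: interval_open.
Qed.

End Final.

Unset Implicit Arguments. Set Strict Implicit.

Theorem lemma16 (R : realType) (S : ptopologicalType)
  (d1 : measure_display) (Om1 : measurableType d1) (P1 : probability Om1 R)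
  (d2 : measure_display) (Om2 : measurableType d2) (P2 : probability Om2 R)
  (X : nat -> Om1 -> borel S) (Y : nat -> Om2 -> borel S) :
  polish R S ->
  (forall n, measurable_fun setT (X n)) ->
  (forall n, measurable_fun setT (Y n)) ->
  dens_close_to_one (fun n => law P1 (X n)) (fun n => law P2 (Y n)) ->
  (forall (d3 : measure_display) (Om3 : measurableType d3) (P3 : probability Om3 R)
     (Y0 : Om3 -> borel S), measurable_fun setT Y0 ->
     cvg_distr P2 Y P3 Y0 -> cvg_distr P1 X P3 Y0)
  /\
  (forall (S' : ptopologicalType) (g : nat -> S -> S'),
     polish R S' -> (forall n, continuous (g n)) ->
     dens_close_to_one
       (fun n => law P1 ((g n : borel S -> borel S') \o X n))
       (fun n => law P2 ((g n : borel S -> borel S') \o Y n))).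

Proof.
move=> _ mX mY Hd.
pose mu n := mkP P1 (mX n); pose nu n := mkP P2 (mY n).
have Hd' : dens_close_to_one (fun n => (mu n : set _ -> \bar R)) (fun n => (nu n : set _ -> \bar R)) := Hd.
have TV1 := dens_TV Hd'.
split.
- move=> d3 Om3 P3 Y0 mY0 Hc h ch [M hM].
  set M' := `|M|.
  have hM' x : `|h x| <= M' by apply: le_trans (hM x) (ler_norm M).
  have M0 : 0 <= M' := normr_ge0 M.
  pose k := fun x => h x + M'.
  have ck : continuous k by move=> x; apply: cvgD; [exact: ch|exact: cvg_cst].
  have mh : measurable_fun setT (h : borel S -> R) := cont_meas_R ch.
  have mk : measurable_fun setT (k : borel S -> R).
    by apply: measurable_funD => //.
  have k0 x : 0 <= k x <= 2 * M'.
    by have := hM' x; rewrite ler_norml /k => /andP[h1 h2]; apply/andP; split; lra.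
  have kb : exists M0, forall x, `|k x| <= M0.
    by exists (2 * M') => x; rewrite ger0_norm; [case/andP: (k0 x)|case/andP: (k0 x)].
  have Hk := Hc k ck kb.
  have mkX n : measurable_fun setT (fun w => k (X n w)) := measurableT_comp mk (mX n).
  have mkY n : measurable_fun setT (fun w => k (Y n w)) := measurableT_comp mk (mY n).
  have mkY0 : measurable_fun setT (fun w => k (Y0 w)) := measurableT_comp mk mY0.
  have finX n := (int_bnd P1 (mkX n) (fun w => k0 (X n w))).1.
  have finY n := (int_bnd P2 (mkY n) (fun w => k0 (Y n w))).1.
  have finY0 := (int_bnd P3 mkY0 (fun w => k0 (Y0 w))).1.
  pose a n := fine (\int[P1]_w (k (X n w))%:E)%E.
  pose b n := fine (\int[P2]_w (k (Y n w))%:E)%E.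
  pose L := fine (\int[P3]_w (k (Y0 w))%:E)%E.
  have hb : b n @[n --> \oo] --> L.
    rewrite /L; move: Hk; rewrite -[X in _ --> X]fineK //.
    by move=> /fine_cvgP[_].
  have hab : forall e, 0 < e -> \forall n \near \oo, `|a n - b n| <= 2 * M' * e.
    move=> e e0; have T1 := TV1 e e0; have T2 := @TV_sym _ _ _ mu nu TV1 e e0.
    near=> n.
    have t1 : forall B, measurable B -> (mu n B <= nu n B + e%:E)%E by near: n; exact: T1.
    have t2 : forall B, measurable B -> (nu n B <= mu n B + e%:E)%E by near: n; exact: T2.
    have i1 := @int_le _ _ _ (mu n) (nu n) e (2 * M') k (mulr_ge0 (ler0n _ 2) M0) mk k0 t1.
    have i2 := @int_le _ _ _ (nu n) (mu n) e (2 * M') k (mulr_ge0 (ler0n _ 2) M0) mk k0 t2.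
    rewrite /mu /nu /mkP !ge0_integral_distribution // in i1 i2; first last.
    all: try by move=> y; rewrite lee_fin; case/andP: (k0 y).
    all: try exact/measurable_EFinP.
    have j1 : ((a n)%:E <= (b n)%:E + (2 * M' * e)%:E)%E.
      by rewrite /a /b !fineK //; exact: i1.
    have j2 : ((b n)%:E <= (a n)%:E + (2 * M' * e)%:E)%E.
      by rewrite /a /b !fineK //; exact: i2.
    rewrite -EFinD lee_fin in j1; rewrite -EFinD lee_fin in j2.
    rewrite ler_norml; apply/andP; split; lra.
    Unshelve. all: try by end_near.
  have ha : a n @[n --> \oo] --> L.
    apply/cvgrPdist_le => eps eps0.
    have e0 : 0 < eps / (2 * (2 * M' + 1)) by rewrite divr_gt0 // mulr_gt0 //; lra.
    have := (cvgrPdist_le _ _).1 hb (eps / 2) (divr_gt0 eps0 (ltr0n _ 2)).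
    move=> hbn; near=> n.
    have h1 : `|L - b n| <= eps / 2 by near: n; exact: hbn.
    have h2 : `|a n - b n| <= 2 * M' * (eps / (2 * (2 * M' + 1))) by near: n; exact: hab.
    have h3 : 2 * M' * (eps / (2 * (2 * M' + 1))) <= eps / 2.
      have -> : eps / 2 = (2 * M' + 1) * (eps / (2 * (2 * M' + 1))).
        by field; lra.
      rewrite ler_wpM2r //; [exact: ltW | lra].
    have := ler_distD (b n) L (a n); rewrite (distrC (b n)); lra.
    Unshelve. all: try by end_near.
  have EX n : (\int[P1]_w (h (X n w))%:E = ((a n) - M')%:E)%E.
    rewrite (int_shift P1 (measurableT_comp mh (mX n)) (fun w => hM' (X n w))).
    by rewrite EFinB /a fineK //; exact: finX.
  have EY0 : (\int[P3]_w (h (Y0 w))%:E = (L - M')%:E)%E.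
    rewrite (int_shift P3 (measurableT_comp mh mY0) (fun w => hM' (Y0 w))).
    by rewrite EFinB /L fineK.
  rewrite EY0 (_ : (fun n => _) = (fun n => ((a n) - M')%:E)); last first.
    by apply/funext => n; rewrite EX.
  apply: cvg_EFin; first exact: nearW.
  apply: cvgB => //; exact: cvg_cst.
- move=> S' g _ cg.
  have mgX n : measurable_fun setT ((g n : borel S -> borel S') \o X n) :=
    measurableT_comp (cont_meas_borel (cg n)) (mX n).
  have mgY n : measurable_fun setT ((g n : borel S -> borel S') \o Y n) :=
    measurableT_comp (cont_meas_borel (cg n)) (mY n).
  pose mu' n := mkP P1 (mgX n); pose nu' n := mkP P2 (mgY n).
  have TV2 : TVd (fun n => mu' n) (fun n => nu' n).
    move=> e e0; apply: filterS (TV1 e e0) => n h B mB.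
    have mgB : measurable ((g n : borel S -> borel S') @^-1` B).
      by have := cont_meas_borel (cg n) measurableT mB; rewrite setTI.
    exact: h _ mgB.
  exact: (TV_dens TV2).
Qed.
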